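(* Let $F:\mathbb{R}^d\to\mathbb{R}^d$ be $L$-Lipschitz, $G:\mathbb{R}^d\rightrightarrows\mathbb{R}^d$ maximally monotone, the solution set of $0\in F(x)+G(x)$ nonempty, and $F+G$ maximally $\rho$-cohypomonotone with $\rho>0$. Let $\eta>\rho$, $\alpha=1-\frac\rho\eta$, $\beta_k=\frac1{k+2}$, $x_0\in\mathbb{R}^d$, and let $x^\star$ be a solution. Suppose the sequence $(x_k)$ satisfies $x_{k+1}=\beta_kx_0+(1-\beta_k)\big((1-\alpha)x_k+\alpha\widetilde J_k\big)$ for $k\ge0$, where the points $\widetilde J_k\in\mathbb{R}^d$ satisfy $\|J_{\eta(F+G)}(x_k)-\widetilde J_k\|\le\varepsilon_k$ for some $\varepsilon_k>0$. Let $R=\mathrm{Id}-J_{\eta(F+G)}$. Then for any $K\ge1$, $$\frac{K(K+1)}{4}\|R(x_K)\|^2-\frac{K+1}{K\alpha^2}\|x^\star-x_0\|^2\le\sum_{k=0}^{K-1}\left(\frac{(k+1)(k+2)\varepsilon_k^2}{2}+(k+1)\|R(x_k)\|\varepsilon_k\right),$$ and $\|x_k-x^\star\|\le\|x_0-x^\star\|+\frac{\alpha}{k+1}\sum_{i=0}^{k-1}(i+1)\varepsilon_i$.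
   Context: For an operator $A$, $J_A=(\mathrm{Id}+A)^{-1}$ is its resolvent. $F+G$ is $\rho$-cohypomonotone if $\langle u-v,x-y\rangle\ge-\rho\|u-v\|^2$ for all $(x,u),(y,v)$ in its graph; maximal means its graph is not strictly contained in the graph of another $\rho$-cohypomonotone operator. *)

(* Defs.v *)
From HB Require Import structures.
From mathcomp Require Import all_boot all_order all_algebra.
From mathcomp Require Import reals.
From Stdlib Require Import ClassicalEpsilon.
Set Implicit Arguments. Unset Strict Implicit. Unset Printing Implicit Defensive.
Import Order.TTheory GRing.Theory Num.Theory.
Local Open Scope ring_scope.

Section Defs.
Variables (R : realType) (d : nat).
Notation vec := 'rV[R]_d.

Definition dotp (u v : vec) : R := \sum_(i < d) u ord0 i * v ord0 i.
Definition enorm (u : vec) : R := Num.sqrt (dotp u u).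

(* set-valued operators R^d ⇉ R^d, given by their graphs: A x u <-> u ∈ A(x) *)
Definition op := vec -> vec -> Prop.

Definition op_of_fun (F : vec -> vec) : op := fun x u => u = F x.

Definition op_add (F : vec -> vec) (G : op) : op :=
  fun x u => exists g, G x g /\ u = F x + g.

Definition lipschitz (L : R) (F : vec -> vec) : Prop :=
  forall x y, enorm (F x - F y) <= L * enorm (x - y).

Definition monotone_op (A : op) : Prop :=
  forall x y u v, A x u -> A y v -> 0 <= dotp (u - v) (x - y).

Definition maximally_monotone (A : op) : Prop :=
  monotone_op A /\
  forall B : op, monotone_op B -> (forall x u, A x u -> B x u) ->
    (forall x u, B x u -> A x u).

Definition cohypomonotone (rho : R) (A : op) : Prop :=
  forall x y u v, A x u -> A y v ->
    - rho * dotp (u - v) (u - v) <= dotp (u - v) (x - y).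

Definition maximally_cohypomonotone (rho : R) (A : op) : Prop :=
  cohypomonotone rho A /\
  forall B : op, cohypomonotone rho B -> (forall x u, A x u -> B x u) ->
    (forall x u, B x u -> A x u).

(* graph of the resolvent J_{eta A} = (Id + eta A)^{-1} *)
Definition resolvent_rel (eta : R) (A : op) : op :=
  fun x y => exists u, A y u /\ x = y + eta *: u.

(* the resolvent as a point: the (chosen) element of J_{eta A}(x);
   under the hypotheses of the theorem J_{eta A} is single-valued with
   full domain, so this is exactly J_{eta A}(x). *)
Definition resolvent (eta : R) (A : op) (x : vec) : vec :=
  epsilon (inhabits x) (fun y => resolvent_rel eta A x y).

End Defs.

(* Main.v *)
Require Import Defs.
From HB Require Import structures.
From mathcomp Require Import all_boot all_order all_algebra.
From mathcomp Require Import reals.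
From mathcomp Require Import classical_sets.
From mathcomp Require Import ring lra.
From Stdlib Require Import ClassicalEpsilon.
Import Order.TTheory GRing.Theory Num.Theory.
Set Implicit Arguments. Unset Strict Implicit. Unset Printing Implicit Defensive.
Local Open Scope ring_scope.


Section Dot.
Variables (R : realType) (d : nat).
Notation vec := 'rV[R]_d.
Implicit Types u v w : vec.

Lemma dotpC u v : dotp u v = dotp v u.
Proof. by rewrite /dotp; apply: eq_bigr => i _; rewrite mulrC. Qed.
Lemma dotpDl u v w : dotp (u + v) w = dotp u w + dotp v w.
Proof. by rewrite /dotp -big_split; apply: eq_bigr => i _; rewrite !mxE mulrDl. Qed.
Lemma dotpDr u v w : dotp w (u + v) = dotp w u + dotp w v.
Proof. by rewrite dotpC dotpDl !(dotpC w). Qed.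
Lemma dotpZl a u v : dotp (a *: u) v = a * dotp u v.
Proof. by rewrite /dotp mulr_sumr; apply: eq_bigr => i _; rewrite !mxE mulrA. Qed.
Lemma dotpZr a u v : dotp v (a *: u) = a * dotp v u.
Proof. by rewrite dotpC dotpZl dotpC. Qed.
Lemma dotpNl u v : dotp (- u) v = - dotp u v.
Proof. by rewrite -scaleN1r dotpZl mulN1r. Qed.
Lemma dotpNr u v : dotp v (- u) = - dotp v u.
Proof. by rewrite dotpC dotpNl dotpC. Qed.
Lemma dotpBl u v w : dotp (u - v) w = dotp u w - dotp v w.
Proof. by rewrite dotpDl dotpNl. Qed.
Lemma dotpBr u v w : dotp w (u - v) = dotp w u - dotp w v.
Proof. by rewrite dotpDr dotpNr. Qed.
Lemma dotp0l u : dotp 0 u = 0.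
Proof. by rewrite /dotp big1 // => i _; rewrite mxE mul0r. Qed.
Lemma dotp0r u : dotp u 0 = 0.
Proof. by rewrite dotpC dotp0l. Qed.
Lemma dotp_ge0 u : 0 <= dotp u u.
Proof. by rewrite /dotp sumr_ge0 // => i _; rewrite -expr2 sqr_ge0. Qed.
Lemma dotp_eq0 u : dotp u u = 0 -> u = 0.
Proof.
rewrite /dotp => /eqP; rewrite psumr_eq0; last by move=> i _; rewrite -expr2 sqr_ge0.
move=> /allP H; apply/rowP => i; rewrite mxE.
have := H i (mem_index_enum i); rewrite mulf_eq0 orbb => /eqP //.
Qed.
Lemma coord_le u (i : 'I_d) : (u ord0 i) ^+ 2 <= dotp u u.
Proof.
rewrite /dotp (bigD1 i) //= expr2 lerDl sumr_ge0 // => j _.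
by rewrite -expr2 sqr_ge0.
Qed.
Lemma enorm_sq u : enorm u ^+ 2 = dotp u u.
Proof. by rewrite /enorm sqr_sqrtr // dotp_ge0. Qed.
Lemma enorm_ge0 u : 0 <= enorm u.
Proof. exact: sqrtr_ge0. Qed.
Lemma enormN u : enorm (- u) = enorm u.
Proof. by rewrite /enorm dotpNl dotpNr opprK. Qed.
Lemma enormZ a u : enorm (a *: u) = `|a| * enorm u.
Proof. by rewrite /enorm dotpZl dotpZr mulrA -expr2 sqrtrM ?sqr_ge0 // sqrtr_sqr. Qed.

Lemma CS_sq u v : dotp u v ^+ 2 <= dotp u u * dotp v v.
Proof.
have H t : 0 <= dotp u u - 2 * t * dotp u v + t ^+ 2 * dotp v v.
  have := dotp_ge0 (u - t *: v).
  by rewrite !(dotpBl, dotpBr, dotpZl, dotpZr) (dotpC v u); lra.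
have hu := dotp_ge0 u; have hv := dotp_ge0 v.
move: H hu hv; set a := dotp u u; set b := dotp v v; set c := dotp u v => H hu hv.
have [v0|vp] := eqVneq b 0.
  have [->|uv] := eqVneq c 0; first by rewrite expr0n /= mulr_ge0.
  have := H ((a + 1) / (2 * c)).
  have -> : 2 * ((a + 1) / (2 * c)) * c = a + 1.
    by field; rewrite uv.
  rewrite v0; lra.
have vp' : 0 < b by rewrite lt_def vp hv.
have tb : c / b * b = c by rewrite -mulrA mulVf // mulr1.
have := H (c / b); move: tb; set t := c / b => tb Ht.
nra.
Qed.

Lemma CS u v : dotp u v <= enorm u * enorm v.
Proof.
rewrite /enorm -sqrtrM ?dotp_ge0 //.
apply: (le_trans (ler_norm _)); rewrite -sqrtr_sqr.
by apply: ler_wsqrtr; apply: CS_sq.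
Qed.

Lemma enormD u v : enorm (u + v) <= enorm u + enorm v.
Proof.
have h : dotp (u + v) (u + v) <= (enorm u + enorm v) ^+ 2.
  rewrite !(dotpDl, dotpDr) (dotpC v u) sqrrD !enorm_sq.
  have := CS u v; lra.
rewrite /enorm; apply: (le_trans (ler_wsqrtr h)).
by rewrite sqrtr_sqr ger0_norm // addr_ge0 // sqrtr_ge0.
Qed.

Lemma enorm_le_sq u v : dotp u u <= dotp v v -> enorm u <= enorm v.
Proof. by move=> h; apply: ler_wsqrtr. Qed.
End Dot.

Ltac dexp := rewrite ?(dotpDl, dotpDr, dotpNl, dotpNr, dotpZl, dotpZr, dotp0l, dotp0r).



Section Minty.
Variables (R : realType) (d : nat).
Notation vec := 'rV[R]_d.
Notation mes := (seq (R * (vec * vec))).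

Definition mA (s : mes) : vec := \sum_(p <- s) p.1 *: p.2.1.
Definition mB (s : mes) : vec := \sum_(p <- s) p.1 *: p.2.2.
Definition mK (s : mes) : R := \sum_(p <- s) p.1 * dotp p.2.1 p.2.2.
Definition mW (s : mes) : R := \sum_(p <- s) p.1.

Definition mix (t : R) (s1 s2 : mes) : mes :=
  map (fun p => ((1 - t) * p.1, p.2)) s1 ++ map (fun p => (t * p.1, p.2)) s2.

Lemma mA_mix (t : R) (s1 s2 : mes) : mA (mix t s1 s2) = (1 - t) *: mA s1 + t *: mA s2.
Proof.
by rewrite /mA /mix big_cat !big_map /= !scaler_sumr; congr (_ + _);
  apply: eq_bigr => p _; rewrite scalerA.
Qed.
Lemma mB_mix (t : R) (s1 s2 : mes) : mB (mix t s1 s2) = (1 - t) *: mB s1 + t *: mB s2.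
Proof.
by rewrite /mB /mix big_cat !big_map /= !scaler_sumr; congr (_ + _);
  apply: eq_bigr => p _; rewrite scalerA.
Qed.
Lemma mK_mix (t : R) (s1 s2 : mes) : mK (mix t s1 s2) = (1 - t) * mK s1 + t * mK s2.
Proof.
by rewrite /mK /mix big_cat !big_map /= !mulr_sumr; congr (_ + _);
  apply: eq_bigr => p _; rewrite mulrA.
Qed.
Lemma mW_mix (t : R) (s1 s2 : mes) : mW (mix t s1 s2) = (1 - t) * mW s1 + t * mW s2.
Proof.
by rewrite /mW /mix big_cat !big_map /= !mulr_sumr.
Qed.

Lemma mA_cons p s : mA (p :: s) = p.1 *: p.2.1 + mA s.
Proof. by rewrite /mA big_cons. Qed.
Lemma mB_cons p s : mB (p :: s) = p.1 *: p.2.2 + mB s.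
Proof. by rewrite /mB big_cons. Qed.
Lemma mK_cons p s : mK (p :: s) = p.1 * dotp p.2.1 p.2.2 + mK s.
Proof. by rewrite /mK big_cons. Qed.
Lemma mW_cons p s : mW (p :: s) = p.1 + mW s.
Proof. by rewrite /mW big_cons. Qed.
Lemma mA_nil : mA [::] = 0. Proof. by rewrite /mA big_nil. Qed.
Lemma mB_nil : mB [::] = 0. Proof. by rewrite /mB big_nil. Qed.
Lemma mK_nil : mK [::] = 0. Proof. by rewrite /mK big_nil. Qed.
Lemma mW_nil : mW [::] = 0. Proof. by rewrite /mW big_nil. Qed.

Lemma inner_sum (a b : vec) (s : mes) :
  \sum_(q <- s) q.1 * dotp (a - q.2.1) (b - q.2.2)
  = mW s * dotp a b - dotp a (mB s) - dotp (mA s) b + mK s.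
Proof.
elim: s => [|q s IH].
  by rewrite big_nil mW_nil mB_nil mA_nil mK_nil; dexp; rewrite mul0r; lra.
rewrite big_cons IH mW_cons mB_cons mA_cons mK_cons; dexp; lra.
Qed.

Lemma outer_sum (W K : R) (A B : vec) (s : mes) :
  \sum_(p <- s) p.1 * (W * dotp p.2.1 p.2.2 - dotp p.2.1 B - dotp A p.2.2 + K)
  = W * mK s - dotp (mA s) B - dotp A (mB s) + K * mW s.
Proof.
elim: s => [|q s IH].
  by rewrite big_nil mW_nil mB_nil mA_nil mK_nil; dexp; lra.
rewrite big_cons IH mW_cons mB_cons mA_cons mK_cons; dexp; lra.
Qed.

Variable (B : op R d).
Hypothesis Bmono : monotone_op B.

Definition valid (s : mes) : Prop :=
  (forall p, p \in s -> 0 <= p.1 /\ B p.2.1 p.2.2) /\ mW s = 1.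

Lemma valid_mix (t : R) (s1 s2 : mes) : 0 <= t <= 1 -> valid s1 -> valid s2 -> valid (mix t s1 s2).
Proof.
move=> /andP[t0 t1] [h1 w1] [h2 w2]; split; last by rewrite mW_mix w1 w2; lra.
move=> p; rewrite mem_cat => /orP[] /mapP[q qin ->] /=.
  by have [? ?] := h1 q qin; split => //; apply: mulr_ge0 => //; lra.
by have [? ?] := h2 q qin; split => //; apply: mulr_ge0.
Qed.

Lemma K_ge s : valid s -> dotp (mA s) (mB s) <= mK s.
Proof.
move=> [h w].
have key : 0 <= \sum_(p <- s) p.1 *
   \sum_(q <- s) q.1 * dotp (p.2.1 - q.2.1) (p.2.2 - q.2.2).
  rewrite big_seq sumr_ge0 // => p ps; have [p0 Bp] := h p ps.
  rewrite mulr_ge0 // big_seq sumr_ge0 // => q qs; have [q0 Bq] := h q qs.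
  by rewrite mulr_ge0 //; rewrite dotpC; apply: Bmono.
move: key; under eq_bigr do rewrite inner_sum.
rewrite outer_sum w; lra.
Qed.

Variable z : vec.
Definition mm (s : mes) : vec := (1/2) *: (z - mB s + mA s).
Definition psi (s : mes) : R := dotp z (mA s) - mK s - dotp (mm s) (mm s).

Lemma mm_mix (t : R) (s1 s2 : mes) : mW s1 = 1 -> mW s2 = 1 ->
  mm (mix t s1 s2) = (1 - t) *: mm s1 + t *: mm s2.
Proof.
move=> _ _; rewrite /mm mA_mix mB_mix; apply/rowP => i; rewrite !mxE; ring.
Qed.

Lemma psi_mix (t : R) (s1 s2 : mes) : mW s1 = 1 -> mW s2 = 1 ->
  psi (mix t s1 s2) = (1 - t) * (dotp z (mA s1) - mK s1) + t * (dotp z (mA s2) - mK s2)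
    - dotp ((1 - t) *: mm s1 + t *: mm s2) ((1 - t) *: mm s1 + t *: mm s2).
Proof.
move=> w1 w2; rewrite /psi mm_mix // mA_mix mK_mix; dexp; ring.
Qed.

Lemma psi_le0 s : valid s -> psi s <= 0.
Proof.
move=> v; have := K_ge v; have := dotp_ge0 (z - mB s - mA s).
rewrite /psi /mm; dexp; rewrite !(dotpC (mB s) z) !(dotpC (mA s) z) !(dotpC (mA s) (mB s)).
lra.
Qed.

End Minty.

Section Minty2.
Variables (R : realType) (d : nat).
Notation vec := 'rV[R]_d.
Notation mes := (seq (R * (vec * vec))).
Variable (B : op R d).
Hypothesis Bmono : monotone_op B.
Variables (p0 q0 : vec).
Hypothesis Bp0 : B p0 q0.
Variable z : vec.

Local Open Scope classical_set_scope.

Definition PS : set R := fun r => exists s, valid B s /\ r = psi z s.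
Definition Ssup := sup PS.

Definition mu0 : mes := [:: (1, (p0, q0))].
Lemma valid_mu0 : valid B mu0.
Proof.
split; last by rewrite /mW big_cons big_nil addr0.
by move=> p; rewrite inE => /eqP -> /=; split.
Qed.

Lemma hasS : has_sup PS.
Proof.
rewrite /has_sup; split; first by exists (psi z mu0); exists mu0; split => //; apply: valid_mu0.
by exists 0; move=> r [s [vs ->]]; exact: (psi_le0 Bmono z vs).
Qed.

Lemma psi_le_S s : valid B s -> psi z s <= Ssup.
Proof. by move=> vs; apply: sup_upper_bound; [apply: hasS | exists s]. Qed.

Lemma S_le0 : Ssup <= 0.
Proof. apply: ge_sup; [by case: hasS | move=> r [s [vs ->]]; exact: (psi_le0 Bmono z vs)]. Qed.

Lemma approx (e : R) : 0 < e -> exists s, valid B s /\ Ssup - e < psi z s.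
Proof.
move=> e0; have [r [s [vs ->]] h] := sup_adherent e0 hasS.
by exists s.
Qed.

Definition gap s := Ssup - psi z s.

Lemma gap_ge0 s : valid B s -> 0 <= gap s.
Proof. by move=> vs; rewrite /gap subr_ge0 psi_le_S. Qed.

Lemma mid s1 s2 : valid B s1 -> valid B s2 ->
  dotp (mm z s1 - mm z s2) (mm z s1 - mm z s2) <= 2 * (gap s1 + gap s2).
Proof.
move=> v1 v2.
have vm : valid B (mix (1/2) s1 s2) by apply: valid_mix => //; apply/andP; split; lra.
have := psi_le_S vm; rewrite psi_mix; [|by case: v1|by case: v2].
rewrite /gap /psi; set m1 := mm z s1; set m2 := mm z s2.
dexp; rewrite ?(dotpC m2 m1); lra.
Qed.

Lemma sqrtD_le (a b : R) : 0 <= a -> 0 <= b -> Num.sqrt (a + b) <= Num.sqrt a + Num.sqrt b.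
Proof.
move=> a0 b0.
rewrite -(ger0_norm (addr_ge0 (sqrtr_ge0 a) (sqrtr_ge0 b))) -sqrtr_sqr.
apply: ler_wsqrtr; rewrite sqrrD !sqr_sqrtr //.
have := mulr_ge0 (sqrtr_ge0 a) (sqrtr_ge0 b); lra.
Qed.

Lemma coordB (u v : vec) (i : 'I_d) : (u - v) ord0 i = u ord0 i - v ord0 i.
Proof. by rewrite !mxE. Qed.

Definition rr s := Num.sqrt (2 * gap s).

Lemma coord_bound s1 s2 (i : 'I_d) : valid B s1 -> valid B s2 ->
  mm z s1 ord0 i - rr s1 <= mm z s2 ord0 i + rr s2.
Proof.
move=> v1 v2.
have h1 := coord_le (mm z s1 - mm z s2) i.
have h2 := mid v1 v2.
have g1 := gap_ge0 v1; have g2 := gap_ge0 v2.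
have : `|(mm z s1 - mm z s2) ord0 i| <= rr s1 + rr s2.
  rewrite -sqrtr_sqr /rr; apply: (le_trans _ (sqrtD_le _ _)); last 2 first.
  - by apply: mulr_ge0.
  - by apply: mulr_ge0.
  apply: ler_wsqrtr; lra.
move=> h; rewrite coordB in h; have := ler_norm (mm z s1 ord0 i - mm z s2 ord0 i); lra.
Qed.

Definition Ci (i : 'I_d) : set R := fun r => exists s, valid B s /\ r = mm z s ord0 i - rr s.
Definition ystar : vec := \row_i sup (Ci i).

Lemma hasCi i : has_sup (Ci i).
Proof.
rewrite /has_sup; split; first by exists (mm z mu0 ord0 i - rr mu0); exists mu0; split => //; apply: valid_mu0.
exists (mm z mu0 ord0 i + rr mu0); move=> r [s [vs ->]].
by apply: coord_bound => //; apply: valid_mu0.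
Qed.

Lemma ystar_close s : valid B s ->
  dotp (ystar - mm z s) (ystar - mm z s) <= 2 * d%:R * gap s.
Proof.
move=> vs.
have hi i : ((ystar - mm z s) ord0 i) ^+ 2 <= 2 * gap s.
  have lo : mm z s ord0 i - rr s <= ystar ord0 i.
    by rewrite [ystar ord0 i]mxE; apply: sup_upper_bound; [apply: hasCi | exists s].
  have hi : ystar ord0 i <= mm z s ord0 i + rr s.
    rewrite [ystar ord0 i]mxE; apply: ge_sup; first by case: (hasCi i).
    by move=> r [s' [vs' ->]]; apply: coord_bound.
  have g := gap_ge0 vs.
  have rsq : rr s ^+ 2 = 2 * gap s by rewrite /rr sqr_sqrtr // mulr_ge0.
  have r0 : 0 <= rr s by apply: sqrtr_ge0.
  rewrite coordB -rsq; nra.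
have : \sum_(i < d) (ystar - mm z s) ord0 i * (ystar - mm z s) ord0 i
    <= \sum_(i < d) 2 * gap s.
  by apply: ler_sum => i _; rewrite -expr2; apply: hi.
rewrite sumr_const card_ord -mulr_natr /dotp => h; lra.
Qed.


Definition nu1 (a b : vec) : mes := [:: (1, (a, b))].
Lemma valid_nu1 a b : B a b -> valid B (nu1 a b).
Proof.
move=> Bab; split; last by rewrite /mW big_cons big_nil addr0.
by move=> p; rewrite inE => /eqP -> /=; split.
Qed.
Lemma mA_nu1 a b : mA (nu1 a b) = a.
Proof. by rewrite /mA big_cons big_nil addr0 scale1r. Qed.
Lemma mB_nu1 a b : mB (nu1 a b) = b.
Proof. by rewrite /mB big_cons big_nil addr0 scale1r. Qed.
Lemma mK_nu1 a b : mK (nu1 a b) = dotp a b.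
Proof. by rewrite /mK big_cons big_nil addr0 mul1r. Qed.

Lemma g_ident (y a b : vec) :
  - dotp (z - y - b) (y - a)
  = dotp y y - 2 * dotp y ((1/2) *: (z - b + a)) + (dotp z a - dotp a b).
Proof.
dexp; rewrite ?(dotpC z y) ?(dotpC b y) ?(dotpC a y) ?(dotpC b a) ?(dotpC a z) ?(dotpC b z).
lra.
Qed.

Lemma g_bound (s : mes) (a b : vec) (t : R) : valid B s -> B a b -> 0 < t <= 1 ->
  t * (- dotp (z - ystar - b) (ystar - a))
  <= 2 * (2 * d%:R * gap s) + gap s
     + 2 * t ^+ 2 * dotp (ystar - (1/2) *: (z - b + a)) (ystar - (1/2) *: (z - b + a)).
Proof.
move=> vs Bab /andP[t0 t1].
have vt : valid B (mix t s (nu1 a b)).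
  by apply: valid_mix => //; [apply/andP; split; lra | apply: valid_nu1].
have H1 := psi_le_S vt.
rewrite psi_mix in H1; [|by case: vs|by case: (valid_nu1 Bab)].
rewrite mA_nu1 mK_nu1 in H1.
have Hc := ystar_close vs.
have HS := S_le0.
have Hg := gap_ge0 vs.
rewrite g_ident.
move: H1 Hc Hg.
rewrite /gap /psi.
set y := ystar; set m := mm z s; set mj := (1/2) *: (z - b + a).
set c0 := dotp z a - dotp a b.
have -> : mm z (nu1 a b) = mj by rewrite /mm mA_nu1 mB_nu1.
move=> H1 Hc Hg; clearbody y m mj c0.
have H2 := dotp_ge0 ((1 - t) *: (y - m) - t *: (y - mj)).
have E0 := dotp_ge0 (y - m).
have H3 : 0 <= (2 * t - t ^+ 2) * dotp (y - m) (y - m).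
  by apply: mulr_ge0 => //; nra.
have H4 : 0 <= (1 - t) * dotp (y - m) (y - m) by apply: mulr_ge0 => //; lra.
have H5 : t * Ssup <= 0 by nra.
have H6 : 0 <= t * (Ssup - (dotp z (mA s) - mK s - dotp m m)) by apply: mulr_ge0 => //; lra.
move: H1 H2 H3 H4 H5 H6 E0 Hc; dexp.
rewrite ?(dotpC m y) ?(dotpC mj y) ?(dotpC mj m).
move=> H1 H2 H3 H4 H5 H6 E0 Hc.
lra.
Qed.

Lemma ystar_ok (a b : vec) : B a b -> 0 <= dotp (z - ystar - b) (ystar - a).
Proof.
move=> Bab; rewrite leNgt; apply/negP => hlt.
set g := - dotp (z - ystar - b) (ystar - a).
have g0 : 0 < g by rewrite /g oppr_gt0.
set W := dotp (ystar - (1/2) *: (z - b + a)) (ystar - (1/2) *: (z - b + a)).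
have W0 : 0 <= W by apply: dotp_ge0.
set t := g / (4 * W + 1 + g).
have den0 : 0 < 4 * W + 1 + g by lra.
have tg : t * (4 * W + 1 + g) = g by rewrite /t divfK // gt_eqF.
have t0 : 0 < t by rewrite /t divr_gt0.
have t1 : t <= 1 by rewrite /t ler_pdivrMr // mul1r; lra.
clearbody t.
have tg0 : 0 <= t * g by apply: mulr_ge0; lra.
have h4 : 4 * t * W <= g by move: tg; lra.
have tW : 2 * t ^+ 2 * W <= t * g / 2.
  have := ler_wpM2l (ltW t0) h4; lra.
have D0 : 0 < 4 * d%:R + 1 :> R by have := ler0n R d; lra.
set e := t * g / (2 * (4 * d%:R + 1)).
have e0 : 0 < e by rewrite /e divr_gt0 // ?mulr_gt0 //; lra.
have eE : (4 * d%:R + 1) * e = t * g / 2.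
  by rewrite /e; field; rewrite gt_eqF.
clearbody e.
have [s [vs hs]] := approx e0.
have gs : gap s < e by rewrite /gap; lra.
have gs0 := gap_ge0 vs.
have hb := g_bound vs Bab (t := t) (ltac:(apply/andP; split; lra)).
have : (4 * d%:R + 1) * gap s < (4 * d%:R + 1) * e by rewrite ltr_pM2l.
rewrite eE.
move: hb; rewrite -/g -/W; nra.
Qed.

End Minty2.

Theorem minty (R : realType) (d : nat) (B : op R d) :
  maximally_monotone B -> (exists p q, B p q) ->
  forall z : 'rV[R]_d, exists y, B y (z - y).
Proof.
move=> [Bmono Bmax] [p0 [q0 Bp0]] z.
set y := ystar B z.
exists y.
have ok : forall a b, B a b -> 0 <= dotp (z - y - b) (y - a).
  by move=> a b; apply: (ystar_ok Bmono Bp0).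
pose B' := fun x u => B x u \/ (x = y /\ u = z - y).
apply: (Bmax B') => //; last by right.
- move=> x1 x2 u1 u2 [h1|[-> ->]] [h2|[-> ->]].
  + exact: Bmono.
  + rewrite -[u1 - _]opprB -[x1 - y]opprB dotpNl dotpNr opprK; exact: ok.
  + exact: (ok _ _ h2).
  + have -> : y - y = 0 by apply/rowP => i; rewrite !mxE subrr.
    by rewrite dotp0r.
- by move=> a b h; left.
Qed.


Section Resolvent.
Variables (R : realType) (d : nat).
Notation vec := 'rV[R]_d.
Variables (A : op R d) (rho eta : R) (xs : vec).
Hypotheses (rho0 : 0 < rho) (rhoeta : rho < eta).
Hypothesis Amax : maximally_cohypomonotone rho A.
Hypothesis Axs : A xs 0.

Let c := eta - rho.
Let c0 : 0 < c. Proof. by rewrite /c subr_gt0. Qed.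
Let cn0 : c != 0. Proof. by rewrite gt_eqF // c0. Qed.

Definition Mop : op R d := fun u m => A (c *: m - rho *: u) u.

Lemma Mop_mono : monotone_op Mop.
Proof.
move=> u u' m m' h h'.
have H := (proj1 Amax) _ _ _ _ h h'.
have : 0 <= c * dotp (m - m') (u - u').
  move: H; dexp; rewrite ?(dotpC m u) ?(dotpC m' u) ?(dotpC m u') ?(dotpC m' u'); lra.
by rewrite (pmulr_rge0 _ c0).
Qed.

Lemma Mop_max : maximally_monotone Mop.
Proof.
split; first exact: Mop_mono.
move=> M' M'mono sub u m hM'.
pose A' : op R d := fun y v => M' v (c^-1 *: (y + rho *: v)).
have A'co : cohypomonotone rho A'.
  move=> y y' v v' h h'.
  have := M'mono _ _ _ _ h h'.
  have E : c^-1 *: (y + rho *: v) - c^-1 *: (y' + rho *: v') = c^-1 *: ((y - y') + rho *: (v - v')).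
    by apply/rowP => i; rewrite !mxE; ring.
  have ic : 0 < c^-1 by rewrite invr_gt0 c0.
  rewrite E dotpZl (pmulr_rge0 _ ic).
  dexp; rewrite ?(dotpC y v) ?(dotpC y' v) ?(dotpC y v') ?(dotpC y' v'); lra.
have sub' : forall y v, A y v -> A' y v.
  move=> y v h; apply: sub; rewrite /Mop.
  have -> : c *: (c^-1 *: (y + rho *: v)) - rho *: v = y.
    by apply/rowP => i; rewrite !mxE; field.
  exact: h.
have := (proj2 Amax) A' A'co sub' (c *: m - rho *: u) u.
rewrite /A'.
have -> : c^-1 *: (c *: m - rho *: u + rho *: u) = m.
  by apply/rowP => i; rewrite !mxE; field.
by move=> /(_ hM').
Qed.

Lemma resolvent_exists x : exists y, resolvent_rel eta A x y.
Proof.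
have ne : exists p q, Mop p q.
  exists 0, (c^-1 *: xs); rewrite /Mop.
  have -> : c *: (c^-1 *: xs) - rho *: 0 = xs.
    by apply/rowP => i; rewrite !mxE; field.
  exact: Axs.
have [u hu] := minty Mop_max ne (c^-1 *: x).
exists (x - eta *: u), u; split.
  move: hu; rewrite /Mop.
  have -> : c *: (c^-1 *: x - u) - rho *: u = x - eta *: u.
    by apply/rowP => i; rewrite !mxE /c; field.
  by [].
by rewrite subrK.
Qed.

Lemma resolvent_spec x : resolvent_rel eta A x (resolvent eta A x).
Proof. by rewrite /resolvent; apply: epsilon_spec; apply: resolvent_exists. Qed.

Definition Res (y : vec) : vec := y - resolvent eta A y.

Lemma Res_u x : exists u, A (resolvent eta A x) u /\ Res x = eta *: u /\ x = resolvent eta A x + eta *: u.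
Proof.
have [u [h e]] := resolvent_spec x.
exists u; split => //; split => //; rewrite /Res.
move: e; set y := resolvent eta A x => e; clearbody y.
by rewrite [in LHS]e addrAC subrr add0r.
Qed.

Lemma Res_coco x x' :
  (1 - rho / eta) * dotp (Res x - Res x') (Res x - Res x') <= dotp (Res x - Res x') (x - x').
Proof.
have [u [h [r e]]] := Res_u x.
have [u' [h' [r' e']]] := Res_u x'.
have co := (proj1 Amax) _ _ _ _ h h'.
rewrite r r'.
move: co e e'; set y := resolvent eta A x; set y' := resolvent eta A x'.
clearbody y y' => co e e'; rewrite e e'; move: co.
have eta0 : 0 < eta by have := rhoeta; have := rho0; lra.
move=> co.
have co' : 0 <= eta * (dotp (u - u') (y - y') + rho * dotp (u - u') (u - u')).
  by apply: mulr_ge0; [lra | move: co; lra].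
have kE : (1 - rho / eta) * eta = eta - rho by field; rewrite gt_eqF.
move: (1 - rho / eta) kE => k kE.
have -> : k * dotp (eta *: u - eta *: u') (eta *: u - eta *: u')
   = (k * eta) * eta * dotp (u - u') (u - u').
  by dexp; ring.
rewrite kE.
have -> : dotp (eta *: u - eta *: u') (y + eta *: u - (y' + eta *: u'))
   = eta * (dotp (u - u') (y - y') + eta * dotp (u - u') (u - u')).
  by dexp; ring.
move: co'; set X := dotp (u - u') (u - u'); set Y := dotp (u - u') (y - y').
move=> co'; nra.
Qed.

Lemma Res_xs : Res xs = 0.
Proof.
have [u [h [r e]]] := Res_u xs.
have co := (proj1 Amax) _ _ _ _ h Axs.
have : dotp u u = 0.
  move: co; rewrite subr0.
  have -> : resolvent eta A xs - xs = - (eta *: u).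
    by rewrite {2}e opprD addrA subrr add0r.
  dexp => co.
  have := dotp_ge0 u; have := rhoeta; have := rho0; nra.
by move/dotp_eq0 => u0; rewrite r u0 scaler0.
Qed.

End Resolvent.


Section H.
Variables (R : realType) (d : nat).
Notation vec := 'rV[R]_d.

Lemma pot_step (n : R) (s s' e x x0 x' : vec) :
  0 <= n ->
  (n + 1) *: x' = x0 + n *: (x - s + e) ->
  dotp (s' - s) (s' - s) <= dotp (s' - s) (x' - x) ->
  n * (n + 1) / 2 * dotp s' s' + (n + 1) * dotp s' (x' - x0)
  <= (n - 1) * n / 2 * dotp s s + n * dotp s (x - x0)
     + (n * (n + 1) / 2 * dotp e e + n * dotp s e).
Proof.
move=> n0 hx hc.
have I1 : (n + 1) * dotp s' (x' - x0) = n * dotp s' (x - x0 - s + e).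
  rewrite -dotpZr -dotpZr scalerBr hx; congr (dotp _ _).
  by apply/rowP => i; rewrite !mxE; ring.
have I2 : (n + 1) * dotp (s' - s) (x' - x) = dotp (s' - s) (x0 - x - n *: s + n *: e).
  rewrite -dotpZr scalerBr hx; congr (dotp _ _).
  by apply/rowP => i; rewrite !mxE; ring.
have hc' : n * (n + 1) * dotp (s' - s) (s' - s) <= n * dotp (s' - s) (x0 - x - n *: s + n *: e).
  rewrite -I2 -mulrA; apply: ler_wpM2l => //.
  by apply: ler_wpM2l => //; lra.
have sq : 0 <= n * (n + 1) / 2 * dotp (s' - s - e) (s' - s - e).
  by apply: mulr_ge0; [apply: mulr_ge0; [apply: mulr_ge0 => //; lra | lra] | apply: dotp_ge0].
rewrite I1; move: hc' sq; dexp.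
rewrite ?(dotpC s' s) ?(dotpC e s) ?(dotpC x s) ?(dotpC x0 s) ?(dotpC e s') ?(dotpC x s')
  ?(dotpC x0 s') ?(dotpC x e) ?(dotpC x0 e) ?(dotpC x0 x).
lra.
Qed.

End H.


Section Main.
Variables (R : realType) (d : nat).
Notation vec := 'rV[R]_d.
Variables (F : vec -> vec) (G : op R d) (rho eta : R) (x0 xstar : vec) (x Jt : nat -> vec)
  (eps : nat -> R).
Notation Af := (op_add F G).
Hypotheses (hxs : Af xstar 0) (hrho : 0 < rho) (hmax : maximally_cohypomonotone rho Af)
  (hre : rho < eta) (hx0 : x 0%N = x0) (heps : forall k, 0 < eps k)
  (hJ : forall k : nat, enorm (resolvent eta Af (x k) - Jt k) <= eps k)
  (hrec : forall k : nat,
     x k.+1 = (k.+2%:R)^-1 *: x0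
              + (1 - (k.+2%:R)^-1) *:
                  ((1 - (1 - rho / eta)) *: x k + (1 - rho / eta) *: Jt k)).

Definition aa := 1 - rho / eta.
Lemma eta0 : 0 < eta. Proof. have := hrho; have := hre; lra. Qed.
Lemma a_pos : 0 < aa.
Proof.
rewrite /aa subr_gt0 ltr_pdivrMr ?eta0 // mul1r; exact: hre.
Qed.

Definition rs k := Res Af eta (x k).
Definition ss k := aa *: rs k.
Definition del k := Jt k - resolvent eta Af (x k).
Definition ee k := aa *: del k.

Lemma rec_vec k : (k%:R + 1 + 1) *: x k.+1 = x0 + (k%:R + 1) *: (x k - ss k + ee k).
Proof.
have nE : k.+2%:R = k%:R + 1 + 1 :> R by rewrite -!natr1.
have n0 : k%:R + 1 + 1 != 0 :> R by rewrite -nE pnatr_eq0.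
rewrite hrec nE /ss /ee /rs /del /Res -/aa.
apply/rowP => i; rewrite !mxE; field; exact: n0.
Qed.

Lemma coco_s y y' :
  dotp (aa *: Res Af eta y' - aa *: Res Af eta y) (aa *: Res Af eta y' - aa *: Res Af eta y)
  <= dotp (aa *: Res Af eta y' - aa *: Res Af eta y) (y' - y).
Proof.
have h := Res_coco hrho hre hmax hxs y' y.
rewrite -!scalerBr !dotpZl !dotpZr.
have a0 := a_pos.
move: h; rewrite -/aa => h.
by rewrite ler_pM2l.
Qed.

Lemma del_le k : enorm (del k) <= eps k.
Proof. by rewrite /del -enormN opprB; apply: hJ. Qed.

Definition T k := (k%:R + 1) * (k%:R + 2) * eps k ^+ 2 / 2 + (k%:R + 1) * enorm (rs k) * eps k.
Definition V k := k%:R * (k%:R + 1) / 2 * dotp (ss k) (ss k) + (k%:R + 1) * dotp (ss k) (x k - x0).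

Lemma V_step k : V k.+1 <= V k + aa ^+ 2 * T k.
Proof.
have n0 : 0 <= k%:R + 1 :> R by have := ler0n R k; lra.
have := pot_step (s := ss k) (s' := ss k.+1) (e := ee k) n0 (rec_vec k) (coco_s (x k) (x k.+1)).
rewrite /V -natr1.
have : dotp (ee k) (ee k) <= aa ^+ 2 * eps k ^+ 2.
  rewrite /ee dotpZl dotpZr mulrA -expr2 -enorm_sq; apply: ler_wpM2l; first by rewrite sqr_ge0.
  by have h := del_le k; have := enorm_ge0 (del k); nra.
have : dotp (ss k) (ee k) <= aa ^+ 2 * (enorm (rs k) * eps k).
  rewrite /ss /ee dotpZl dotpZr mulrA -expr2; apply: ler_wpM2l; first by rewrite sqr_ge0.
  apply: (le_trans (CS _ _)); apply: ler_wpM2l; first by apply: enorm_ge0.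
  exact: del_le.
rewrite /T.
move: (dotp (ee k) (ee k)) (dotp (ss k) (ee k)) => E1 E2 h2 h1 hp.
have c0 : 0 <= (k%:R + 1) * (k%:R + 1 + 1) / 2 :> R.
  by apply: mulr_ge0; [apply: mulr_ge0; lra | lra].
have hh1 := ler_wpM2l c0 h1.
have hh2 := ler_wpM2l n0 h2.
have kS : k.+1%:R = k%:R + 1 :> R by rewrite -natr1.
rewrite kS; move: hp hh1 hh2.
set Z1 := dotp (ss k.+1) _; set Z2 := dotp (ss k.+1) _; set Z3 := dotp (ss k) _;
  set Z4 := dotp (ss k) _; set N := enorm _; set ep := eps k.
move=> hp hh1 hh2; have t2 : (1 + 1 : R) = 2 by []; rewrite t2 in hp *; lra.
Qed.

Lemma V0 : V 0 = 0.
Proof. by rewrite /V hx0 subrr dotp0r !mulr0 mul0r ?mul0r add0r. Qed.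

Lemma V_sum K : V K <= aa ^+ 2 * \sum_(k < K) T k.
Proof.
elim: K => [|K IH]; first by rewrite V0 big_ord0 mulr0.
rewrite big_ord_recr /= mulrDr; have := V_step K; lra.
Qed.

Lemma coco_star y : aa * dotp (Res Af eta y) (Res Af eta y) <= dotp (Res Af eta y) (y - xstar).
Proof.
have h := Res_coco hrho hre hmax hxs y xstar.
by move: h; rewrite (Res_xs hrho hre hmax hxs) subr0.
Qed.

Lemma part1 K : (1 <= K)%N ->
  (K%:R * (K%:R + 1) / 4) * enorm (rs K) ^+ 2
    - (K%:R + 1) / (K%:R * aa ^+ 2) * enorm (xstar - x0) ^+ 2
  <= \sum_(k < K) T k.
Proof.
move=> K1.
have hV := V_sum K.
have a0 := a_pos.
have Kr1 : 1 <= K%:R :> R by rewrite ler1n.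
have hP := coco_star (x K).
have hQ : - (enorm (rs K) * enorm (xstar - x0)) <= dotp (rs K) (xstar - x0).
  have := CS (- rs K) (xstar - x0); rewrite dotpNl enormN; lra.
have N0 := enorm_ge0 (rs K).
have D0 := enorm_ge0 (xstar - x0).
move: hV; rewrite /V /ss !dotpZl !dotpZr -/(rs K).
have -> : x K - x0 = (x K - xstar) + (xstar - x0) by rewrite addrA subrK.
rewrite dotpDr -enorm_sq.
move: hP hQ Kr1 N0 D0; rewrite -/(rs K) -enorm_sq.
move: (\sum_(k < K) T k) => E.
move: (enorm (rs K)) (enorm (xstar - x0)) (dotp (rs K) (x K - xstar)) (dotp (rs K) (xstar - x0)) (K%:R : R).
move=> N D P Q Kr hP hQ Kr1 N0 D0 hV.
have pos : 0 < aa ^+ 2 * Kr by apply: mulr_gt0; [apply: exprn_gt0 | lra].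
rewrite -(ler_pM2l pos).
have -> : aa ^+ 2 * Kr * (Kr * (Kr + 1) / 4 * N ^+ 2 - (Kr + 1) / (Kr * aa ^+ 2) * D ^+ 2)
   = aa ^+ 2 * Kr ^+ 2 * (Kr + 1) / 4 * N ^+ 2 - (Kr + 1) * D ^+ 2.
  by field; rewrite (gt_eqF a0) (gt_eqF (lt_le_trans ltr01 Kr1)).
have c1 : 0 <= aa * Kr * (Kr + 1) by apply: mulr_ge0; [apply: mulr_ge0; lra | lra].
have h2 := ler_wpM2l c1 hP.
have h3 := ler_wpM2l c1 hQ.
have sq : 0 <= (Kr + 1) * ((aa * Kr * N / 2 - D) ^+ 2 + aa ^+ 2 * Kr * N ^+ 2).
  apply: mulr_ge0; first lra.
  apply: addr_ge0; first exact: sqr_ge0.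
  by apply: mulr_ge0; [apply: mulr_ge0; [apply: sqr_ge0 | lra] | apply: sqr_ge0].
have h1' := ler_wpM2l (ltW (lt_le_trans ltr01 Kr1)) hV.
nra.
Qed.

Lemma nonexp k : enorm (x k - ss k - xstar) <= enorm (x k - xstar).
Proof.
apply: enorm_le_sq.
have h := coco_star (x k).
have a0 := a_pos.
have -> : x k - ss k - xstar = (x k - xstar) - ss k by rewrite addrAC.
move: h; rewrite /ss -/(rs k); set u := x k - xstar; set r := rs k; clearbody u r.
move=> h; dexp; rewrite ?(dotpC u r).
have := ler_wpM2l (ltW a0) h; have := dotp_ge0 r; nra.
Qed.

Lemma ee_le k : enorm (ee k) <= aa * eps k.
Proof.
rewrite /ee enormZ ger0_norm; last exact: ltW a_pos.
by apply: ler_wpM2l; [apply: ltW; apply: a_pos | apply: del_le].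
Qed.

Lemma claim2 k : (k%:R + 1) * enorm (x k - xstar)
  <= (k%:R + 1) * enorm (x0 - xstar) + aa * \sum_(i < k) (i%:R + 1) * eps i.
Proof.
elim: k => [|k IH].
  by rewrite big_ord0 mulr0 addr0 hx0.
rewrite big_ord_recr /=.
have kS : k.+1%:R = k%:R + 1 :> R by rewrite -natr1.
rewrite kS.
have n0 : 0 <= k%:R + 1 :> R by have := ler0n R k; lra.
have n1 : 0 <= k%:R + 1 + 1 :> R by lra.
have E : (k%:R + 1 + 1) *: (x k.+1 - xstar)
   = (x0 - xstar) + (k%:R + 1) *: ((x k - ss k - xstar) + ee k).
  rewrite scalerBr rec_vec; apply/rowP => i; rewrite !mxE; ring.
have : enorm ((k%:R + 1 + 1) *: (x k.+1 - xstar))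
    <= enorm (x0 - xstar) + (k%:R + 1) * (enorm (x k - ss k - xstar) + enorm (ee k)).
  rewrite E; apply: (le_trans (enormD _ _)); rewrite lerD2l enormZ ger0_norm //.
  by apply: ler_wpM2l => //; apply: enormD.
rewrite enormZ ger0_norm //.
have h1 := nonexp k; have h2 := ee_le k.
have h3 := ler_wpM2l n0 (lerD h1 h2).
move: IH h3; set S := \sum_(i < k) _; move=> IH h3 h.
lra.
Qed.

Lemma part2 k : enorm (x k - xstar)
  <= enorm (x0 - xstar) + aa / (k%:R + 1) * \sum_(i < k) (i%:R + 1) * eps i.
Proof.
have n0 : 0 < k%:R + 1 :> R by have := ler0n R k; lra.
rewrite -(ler_pM2l n0) mulrDr.
have -> : (k%:R + 1) * (aa / (k%:R + 1) * \sum_(i < k) (i%:R + 1) * eps i)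
   = aa * \sum_(i < k) (i%:R + 1) * eps i by field; rewrite gt_eqF.
exact: claim2.
Qed.

End Main.

Unset Implicit Arguments.
Set Strict Implicit.

Theorem lemma2p5 (R : realType) (d : nat)
  (F : 'rV[R]_d -> 'rV[R]_d) (G : op R d) (L rho eta : R)
  (x0 xstar : 'rV[R]_d) (x Jt : nat -> 'rV[R]_d) (eps : nat -> R) :
  lipschitz L F ->
  maximally_monotone G ->
  op_add F G xstar 0 ->
  0 < rho ->
  maximally_cohypomonotone rho (op_add F G) ->
  rho < eta ->
  x 0%N = x0 ->
  (forall k : nat, 0 < eps k) ->
  (forall k : nat,
     enorm (resolvent eta (op_add F G) (x k) - Jt k) <= eps k) ->
  (forall k : nat,
     x k.+1 = (k.+2%:R)^-1 *: x0
              + (1 - (k.+2%:R)^-1) *: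
                  ((1 - (1 - rho / eta)) *: x k + (1 - rho / eta) *: Jt k)) ->
  let alpha := 1 - rho / eta in
  let Res := fun y => y - resolvent eta (op_add F G) y in
  (forall K : nat, (1 <= K)%N ->
     (K%:R * (K%:R + 1) / 4) * enorm (Res (x K)) ^+ 2
       - (K%:R + 1) / (K%:R * alpha ^+ 2) * enorm (xstar - x0) ^+ 2
     <= \sum_(k < K)
          ((k%:R + 1) * (k%:R + 2) * eps k ^+ 2 / 2
           + (k%:R + 1) * enorm (Res (x k)) * eps k))
  /\
  (forall k : nat,
     enorm (x k - xstar)
     <= enorm (x0 - xstar)
        + alpha / (k%:R + 1) * \sum_(i < k) (i%:R + 1) * eps i).
Proof.
move=> _ _ hxs hrho hmax hre hx0 heps hJ hrec alpha Res.
split.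
- move=> K K1.
  exact: (part1 hxs hrho hmax hre hx0 hJ hrec K1).
- move=> k.
  exact: (part2 hxs hrho hmax hre hx0 hJ hrec k).
Qed.
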